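(* Let $y\in W^{1,1}_{\mathrm{loc}}([0,\infty);\mathbb{R})$ with $y\ge0$ on $[0,\infty)$, $\delta\in(0,1)$, $\alpha>0$, $T_0>0$, and set $$y_\star=\big(\alpha\,\delta^\delta(1-\delta)\big)^{\frac1{1-\delta}},\qquad x_\star=\big(\alpha\,\delta(1-\delta)T_0\big)^{\frac1{1-\delta}}.$$ If $y(0)\le x_\star$ and if for almost every $t>0$, $$y'(t)+\alpha y(t)^\delta\le y_\star(T_0-t)_+^{\frac{\delta}{1-\delta}},$$ then $y(t)=0$ for every $t\ge T_0$.
   Context: $x_+=\max\{x,0\}$. *)

(* Defs.v *)
From HB Require Import structures.
From mathcomp Require Import all_boot all_order all_algebra.
From mathcomp Require Import all_classical all_reals all_analysis.
Set Implicit Arguments. Unset Strict Implicit. Unset Printing Implicit Defensive.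
Import Order.TTheory GRing.Theory Num.Theory.
Local Open Scope classical_set_scope.
Local Open Scope ring_scope.

(* [W11loc_with_deriv y g]: y belongs to W^{1,1}_loc([0,oo)) (continuous
   representative) and g is (a representative of) its weak derivative y':
   g is Lebesgue integrable on every [0,T] and y(t) = y(0) + \int_0^t g
   for every t >= 0. *)
Definition W11loc_with_deriv (R : realType) (y g : R -> R) : Prop :=
  (forall T : R, 0 < T ->
     (lebesgue_measure : set R -> \bar R).-integrable `[0, T] (EFin \o g)) /\
  (forall t : R, 0 <= t ->
     (y t)%:E = ((y 0)%:E + \int[lebesgue_measure]_(s in `[0%R, t]) (g s)%:E)%E).

Definition pos_part (R : realType) (x : R) : R := Num.max x 0.

(* Main.v *)
Require Import Defs.
From HB Require Import structures.
From mathcomp Require Import all_boot all_order all_algebra.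
From mathcomp Require Import all_classical all_reals all_analysis.
From mathcomp Require Import ring lra.
From mathcomp Require measurable_realfun.
Import Order.TTheory GRing.Theory Num.Theory.
Local Open Scope classical_set_scope.
Local Open Scope ring_scope.

Module Aux.
Import measurable_realfun numFieldNormedType.Exports.
Section Helpers.
Context {R : realType}.
Local Notation mu := (@lebesgue_measure R).

Lemma integrable_transfer (D : set R) (f : R -> R) :
  @measurable _ (measurableTypeR R) D ->
  (lebesgue_measure : set R -> \bar R).-integrable D (EFin \o f) ->
  (@lebesgue_measure R).-integrable D (EFin \o f).
Proof.
move=> mD /integrableP [mf fint].
have mphi : measurable_fun (T:=measurableTypeR R) (U:=R) setT (fun x => x).
  by move=> _ B mB; rewrite setTI; exact: mB.
apply/integrableP; split.
  by move=> mD' B mB; exact: (mf mD' B mB).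
have mD2 : measurable (D : set R) by exact: mD.
have H := @ge0_integral_pushforward _ _ (measurableTypeR R) R R (fun x => x) mphi lebesgue_measure D
  (fun x => `|(EFin \o f) x|%E) mD2.
have fint' : (\int[pushforward lebesgue_measure (fun x : measurableTypeR R => (x : R))]_(y in D) `|(EFin \o f) y| < +oo)%E := fint.
rewrite H in fint'; first exact: fint'.
- have mfX : measurable_fun (T:=measurableTypeR R) D (fun x => (f x)%:E).
    by move=> mD' B mB; exact: (mf mD' B mB).
  have mfX' : measurable_fun (T:=measurableTypeR R) D (abse \o (fun x => (f x)%:E)).
    exact: measurableT_comp.
  by move=> mD' B mB; exact: (mfX' mD' B mB).
- by move=> x _; exact: abse_ge0.
Qed.

Lemma ae_Rintegral_le0 (D : set R) (H : R -> R) : measurable D ->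
  mu.-integrable D (EFin \o H) -> {ae mu, forall r, D r -> H r <= 0} ->
  \int[mu]_(x in D) H x <= 0.
Proof.
move=> mD iH aeH.
have mH := measurable_int _ iH.
suff : (\int[mu]_(x in D) (EFin \o H) x <= 0)%E.
  by rewrite /Rintegral; case: (\int[mu]_(x in D) _)%E => //= r; rewrite lee_fin.
rewrite integralE.
have h1 : (\int[mu]_(x in D) (EFin \o H)^\+ x <= 0)%E.
  have -> : 0%E = (\int[mu]_(x in D) (cst 0%E) x)%E by rewrite integral0.
  apply: (@ae_ge0_le_integral _ _ _ mu D mD) => //.

  - exact: (measurable_realfun.measurable_funepos mH).
  - case: aeH => N [mN N0 sN]; exists N; split => // x /= nx; apply: sN => /= Hx.
    apply: nx => Dx; have := Hx Dx; rewrite funeposE /= => Hx0.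
    by rewrite /maxe /= lte_fin; case: ltP => //; rewrite lee_fin.
have h2 : (0 <= \int[mu]_(x in D) (EFin \o H)^\- x)%E.
  by apply: integral_ge0 => x _; exact: funeneg_ge0.
by rewrite sube_le0 (le_trans h1 h2).
Qed.

Lemma core (a b : R) (w H : R -> R) : a <= b ->
  mu.-integrable `[a, b] (EFin \o H) ->
  (forall v, a <= v <= b -> w v = w a + \int[mu]_(x in `[a, v]) H x) ->
  {ae mu, forall r, a < r <= b -> 0 < w r -> H r <= 0} ->
  w a <= 0 -> w b <= 0.
Proof.
move=> ab iH hw aeH wa0.
rewrite leNgt; apply/negP => wb.
pose S := [set r | a <= r <= b /\ w r <= 0].
have Sa : S a by split; rewrite ?lexx ?ab.
have S0 : S !=set0 by exists a.
have hS : has_sup S by split => //; exists b => r [/andP[_ ]].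
set s := sup S.
have as_ : a <= s := sup_upper_bound hS Sa.
have sb : s <= b by apply: ge_sup => // r [/andP[_ ]].
have cF := parameterized_integral_continuous ab iH.
have ws : w s <= 0.
  rewrite leNgt; apply/negP => ws.
  have sab : (`[a, b]%classic : set R) s by rewrite /= in_itv /= as_ sb.
  have cF' : forall x, `[a, b]%classic x -> (fun v => parameterized_integral mu a v H) x0 @[x0 --> within `[a, b]%classic (nbhs x)] --> parameterized_integral mu a x H.
    by apply/subspace_continuousP; exact: cF.
  move: (cF' s sab) => /cvgrPdist_lt /(_ (w s) ws).
  rewrite near_withinE => /nbhs_ballP [e e0 he].
  have key : forall r, a <= r <= b -> `|s - r| < e -> 0 < w r.
    move=> r rab sr.
    have := he r; rewrite /ball /= => /(_ sr); rewrite in_itv /= rab => /(_ isT).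
    rewrite /parameterized_integral => /ltr_normlP [_ h].
    have hr := hw r rab; have hs := hw s (introT andP (conj as_ sb)).
    lra.
  have ub : ubound S (s - e / 2).
    move=> r [rab wr]; rewrite leNgt; apply/negP => hr.
    have rs : r <= s := sup_upper_bound hS (conj rab wr).
    have := key r rab; rewrite ger0_norm ?subr_ge0 //.
    by move=> /(_ ltac:(lra)); rewrite ltNge wr.
  have := ge_sup S0 ub; rewrite -/s; move: e0 => /= e0; lra.
have sltb : s < b.
  rewrite lt_neqAle sb andbT; apply/negP => /eqP sbE.
  by move: ws; rewrite sbE leNgt wb.
have pos : forall r, s < r <= b -> 0 < w r.
  move=> r /andP[sr rb]; rewrite ltNge; apply/negP => wr0.
  have : S r by split => //; rewrite rb andbT; apply: le_trans as_ (ltW sr).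
  move=> /(sup_upper_bound hS); rewrite /= -/s leNgt sr //.
have diff : w b - w s = \int[mu]_(x in `]s, b]) H x.
  rewrite (hw b) ?ab ?lexx // (hw s) ?as_ ?sb //.
  rewrite -(Rintegral_itvB iH) ?bnd_simp //; lra.
have : \int[mu]_(x in `]s, b]) H x <= 0.
  apply: ae_Rintegral_le0 => //.
    apply: integrableS iH => //; apply: subset_itvr; rewrite bnd_simp //.
  case: aeH => N [mN N0 sN]; exists N; split => // x /= nx; apply: sN => /= Hx.
  apply: nx; rewrite in_itv /= => /andP[sx xb]; apply: Hx.
    by rewrite xb andbT; apply: le_lt_trans as_ sx.
  by apply: pos; rewrite sx xb.
lra.
Qed.
Lemma cont_pp (q : R) : 0 < q -> continuous (fun x : R => (Num.max x 0) `^ q).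
Proof.
move=> q0 x.
have [x0|x0|->] := ltgtP x 0.
- apply/cvgrPdist_lt => e e0; near=> z.
  have zlt : z < 0 by near: z; exact: lt_nbhsl.
  by rewrite /= (max_r (ltW x0)) (max_r (ltW zlt)) subrr normr0.
- have cp : {for x, continuous (fun z : R => z `^ q)}.
    apply: (@differentiable_continuous _ R^o R^o x (fun z : R => z `^ q)); apply/derivable1_diffP.
    by apply: derivable_powR; rewrite in_itv /= andbT.
  apply/cvgrPdist_lt => e e0; near=> z.
  have zpos : 0 < z by near: z; exact: lt_nbhsr.
  rewrite /= (max_l (ltW x0)) (max_l (ltW zpos)).
  near: z; move/cvgrPdist_lt: cp => /(_ e e0); exact.
- apply/cvgrPdist_lt => e e0.
  rewrite /= maxxx powR0 ?gt_eqF //.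
  exists (e `^ q^-1) => /=; first by rewrite powR_gt0.
  move=> z; rewrite /ball_ /= sub0r normrN => hz.
  rewrite sub0r normrN ger0_norm ?powR_ge0 //.
  case: (leP z 0) => z0; first by rewrite powR0 ?gt_eqF.
  have := @gt0_ltr_powR _ q q0 z (e `^ q^-1).
  rewrite !nnegrE ltW // powR_ge0 -powRrM mulVf ?gt_eqF // powRr1 ?ltW //.
  apply => //; by rewrite -(gtr0_norm z0).
Unshelve. all: by end_near.
Qed.

Lemma cont_psi (T0 c q : R) : 0 < q ->
  continuous (fun x : R => c * (Num.max (T0 - x) 0) `^ q).
Proof.
move=> q0 x.
apply: cvgM; first exact: cvg_cst.
apply: (@continuous_comp _ _ _ (fun z : R => T0 - z) (fun z : R => (Num.max z 0) `^ q)).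
  by apply: cvgB; [exact: cvg_cst | exact: cvg_id].
exact: cont_pp.
Qed.

Lemma der_psi (T0 c p x : R) : x < T0 ->
  is_derive x 1 (fun z : R => c * (Num.max (T0 - z) 0) `^ p)
    (- (c * p) * (Num.max (T0 - x) 0) `^ (p - 1)).
Proof.
move=> xT.
have gx : 0 < T0 - x by rewrite subr_gt0.
have hg : is_derive x 1 (fun z : R => T0 - z) (-1).
  apply: (@is_derive_eq _ R^o R^o (fun z : R => T0 - z) x 1 (-1) (0 - 1)); last by rewrite sub0r.
have hc : is_derive x 1 ((fun u : R => u `^ p) \o (fun z : R => T0 - z)) (p * (T0 - x) `^ (p - 1) * -1).
  exact: (@is_derive1_comp _ (fun u : R => u `^ p) (fun z : R => T0 - z) x _ _ (is_derive1_powR p gx) hg).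
have hz := @is_deriveZ _ R^o R^o _ c x 1 _ hc.
apply: (@is_derive_eq _ R^o R^o _ x 1 _ (c *: (p * (T0 - x) `^ (p - 1) * -1))).
  apply: (near_eq_is_derive _ hz) => /=.
  near=> z.
  have zT : z < T0 by near: z; exact: lt_nbhsl.
  by rewrite max_l // subr_ge0 ltW.
by rewrite max_l ?ltW // /GRing.scale /=; ring.
Unshelve. all: by end_near.
Qed.

Lemma psi_ftc (T0 c p v : R) : 1 < p -> 0 <= v <= T0 ->
  c * (Num.max (T0 - v) 0) `^ p = c * (Num.max (T0 - 0) 0) `^ p +
    \int[mu]_(x in `[0, v]) (- (c * p) * (Num.max (T0 - x) 0) `^ (p - 1)).
Proof.
move=> p1 /andP[]; rewrite le_eqVlt => /predU1P[<- _|v0 vT].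
  by rewrite set_itv1 Rintegral_set1 addr0.
have q0 : 0 < p - 1 by rewrite subr_gt0.
have := @continuous_FTC2 R (fun x => - (c * p) * (Num.max (T0 - x) 0) `^ (p - 1))
  (fun z : R => c * (Num.max (T0 - z) 0) `^ p) 0 v v0.
move=> /(_ _ _ _) h.
rewrite /Rintegral h.
- by rewrite /=; ring.
- by apply: continuous_subspaceT; exact: cont_psi.
- split.
  + move=> x; rewrite in_itv /= => /andP[_ xv].
    by case: (@der_psi T0 c p x (lt_le_trans xv vT)).
  + apply: cvg_at_right_filter; exact: (@cont_psi T0 c p (lt_trans ltr01 p1) 0).
  + apply: cvg_at_left_filter; exact: (@cont_psi T0 c p (lt_trans ltr01 p1) v).
- move=> x; rewrite in_itv /= => /andP[_ xv].
  by rewrite derive1E (@derive_val _ _ _ _ _ _ _ (@der_psi T0 c p x (lt_le_trans xv vT))).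
Qed.
End Helpers.

Lemma main_aux (R : realType) (y g : R -> R) (delta alpha T0 : R) :
  W11loc_with_deriv y g ->
  (forall t, 0 <= t -> 0 <= y t) ->
  0 < delta -> delta < 1 -> 0 < alpha -> 0 < T0 ->
  let ystar := (alpha * delta `^ delta * (1 - delta)) `^ (1 / (1 - delta)) in
  let xstar := (alpha * delta * (1 - delta) * T0) `^ (1 / (1 - delta)) in
  y 0 <= xstar ->
  {ae (lebesgue_measure : set R -> \bar R), forall t, 0 < t ->
     g t + alpha * y t `^ delta <=
       ystar * pos_part (T0 - t) `^ (delta / (1 - delta))} ->
  forall t, T0 <= t -> y t = 0.
Proof.
move=> [iG yrep] ypos d0 d1 a0 T00 ystar xstar y0 aeH t tT.
have d1' : 0 < 1 - delta by rewrite subr_gt0.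
have d1n : 1 - delta != 0 by rewrite gt_eqF.
have k0 : 0 < delta / (1 - delta) by rewrite divr_gt0.
have pk : 1 / (1 - delta) = 1 + delta / (1 - delta) by field.
have pdk : 1 / (1 - delta) * delta = delta / (1 - delta) by rewrite mul1r mulrC.
have p1 : 1 < 1 / (1 - delta) by rewrite pk; lra.
have pm1 : 1 / (1 - delta) - 1 = delta / (1 - delta) by rewrite pk; ring.
have A0 : 0 < alpha * delta * (1 - delta) by rewrite !mulr_gt0.
have Ap : alpha * delta * (1 - delta) * (1 / (1 - delta)) = alpha * delta by field.
have powS : forall x, 0 < x -> x `^ (1 / (1 - delta)) = x * x `^ (delta / (1 - delta)).
  move=> x x0; rewrite pk powRD ?powRr1 ?ltW //.
  by apply/implyP => _; rewrite gt_eqF.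
set k := delta / (1 - delta).
set p := 1 / (1 - delta).
set A := alpha * delta * (1 - delta).
set K := A `^ k.
set c := A `^ p.
have c0 : 0 <= c by exact: powR_ge0.
have cE : c = A * K by rewrite /c powS.
have cdE : c `^ delta = K by rewrite /c -powRrM pdk.
have ysE : ystar = alpha * (1 - delta) * K.
  rewrite /ystar -/p /K /A.
  rewrite !powRM ?mulr_ge0 ?powR_ge0 ?ltW //.
  rewrite -powRrM (mulrC delta p) pdk !powS //.
  ring.
have ident : forall m, 0 <= m ->
    ystar * m `^ k - alpha * (c * m `^ p) `^ delta = - (c * p) * m `^ (p - 1).
  move=> m m0.
  rewrite pm1 powRM ?powR_ge0 // cdE -powRrM pdk ysE cE.
  rewrite (_ : A * K * p = alpha * delta * K); last by rewrite mulrAC Ap.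
  ring.
pose psi := fun v : R => c * (Num.max (T0 - v) 0) `^ p.
pose G := fun x : R => - (c * p) * (Num.max (T0 - x) 0) `^ (p - 1).
have yrepR : forall v, 0 <= v -> y v = y 0 + \int[lebesgue_measure]_(x in `[0, v]) g x.
  move=> v v0; move: (yrep v v0); rewrite /Rintegral.
  by case: (\int[_]_(_ in _) _)%E => [r [->]||].
have iGG : lebesgue_measure.-integrable `[0, T0] (EFin \o G).
  apply: continuous_compact_integrable; first exact: segment_compact.
  apply: continuous_subspaceT; apply: cont_psi; by rewrite subr_gt0.
have iG' : forall T, 0 < T -> lebesgue_measure.-integrable `[0, T] (EFin \o g).
  by move=> T T0'; apply: integrable_transfer (iG T T0'); exact: measurable_itv.
have iG0 : forall v, 0 <= v <= T0 -> lebesgue_measure.-integrable `[0, v] (EFin \o g).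
  move=> v /andP[v0 vT]; apply: integrableS (iG' T0 T00) => //.
  by apply: subset_itvl; rewrite bnd_simp.
have iGG0 : forall v, 0 <= v <= T0 -> lebesgue_measure.-integrable `[0, v] (EFin \o G).
  move=> v /andP[v0 vT]; apply: integrableS iGG => //.
  by apply: subset_itvl; rewrite bnd_simp.
have yT0 : y T0 <= 0.
  have I1 : lebesgue_measure.-integrable `[0, T0] (EFin \o (fun x => g x - G x)).
    exact: (integrableB _ (iG' T0 T00) iGG).
  have I2 : forall v, 0 <= v <= T0 -> y v - psi v = y 0 - psi 0 +
      \int[lebesgue_measure]_(x in `[0, v]) (g x - G x).
    move=> v /andP[v0 vT].
    rewrite (yrepR v v0) /psi (@psi_ftc R T0 c p v p1 (introT andP (conj v0 vT))).
    rewrite RintegralB //; first by rewrite /G; ring.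
    - by apply: iG0; rewrite v0.
    - by apply: iGG0; rewrite v0.
  have I3 : {ae lebesgue_measure, forall r, 0 < r <= T0 -> 0 < y r - psi r -> g r - G r <= 0}.
    case: aeH => N [mN N0 sN]; exists N; split => // r /= nr; apply: sN => /= Hr.
    apply: nr => /andP[r0 rT] wr.
    have := Hr r0; rewrite /pos_part -/k => hr.
    have m0 : 0 <= Num.max (T0 - r) 0 by rewrite le_max lexx orbT.
    have := ident _ m0 => hid.
    have psi0 : 0 <= psi r by rewrite mulr_ge0 // powR_ge0.
    have mono : psi r `^ delta <= y r `^ delta.
      apply: ge0_ler_powR.
      - exact: ltW d0.
      - by rewrite nnegrE.
      - rewrite nnegrE; lra.
      - lra.
    have := ler_wpM2l (ltW a0) mono => mono'.
    rewrite /G -hid; rewrite /psi in mono'; lra.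
  have I4 : y 0 - psi 0 <= 0.
    rewrite /psi subr0 (max_l (ltW T00)) /c -powRM; last 2 first.
    - exact: ltW A0.
    - exact: ltW T00.
    by rewrite subr_le0; exact: y0.
  have := @core R 0 T0 (fun v => y v - psi v) (fun x => g x - G x) (ltW T00) I1 I2 I3 I4.
  rewrite /psi subrr maxxx powR0 ?mulr0 ?subr0 //.
  by rewrite gt_eqF //; exact: (lt_trans ltr01 p1).
have Ht : 0 < t := lt_le_trans T00 tT.
have J1 : lebesgue_measure.-integrable `[T0, t] (EFin \o g).
  apply: integrableS (iG' t Ht) => //.
  by apply: subset_itvr; rewrite bnd_simp ltW.
have J2 : forall v, T0 <= v <= t -> y v = y T0 + \int[lebesgue_measure]_(x in `[T0, v]) g x.
  move=> v /andP[Tv vt].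
  have v0 : 0 < v := lt_le_trans T00 Tv.
  rewrite (yrepR v (ltW v0)) (yrepR T0 (ltW T00)).
  have iv := iG' v v0.
  have := @Rintegral_itvB R g (BLeft 0) (BRight v) T0 iv.
  rewrite !bnd_simp => /(_ (ltW T00) Tv).
  rewrite Rintegral_itv_obnd_cbnd; last first.
    apply: integrableS iv => //.
    by apply: subset_itvr; rewrite bnd_simp ltW.
  move=> e; rewrite -e; ring.
have J3 : {ae lebesgue_measure, forall r, T0 < r <= t -> 0 < y r -> g r <= 0}.
  case: aeH => N [mN N0 sN]; exists N; split => // r /= nr; apply: sN => /= Hr.
  apply: nr => /andP[Tr rt] _.
  have := Hr (lt_trans T00 Tr); rewrite /pos_part -/k.
  rewrite (max_r (_ : T0 - r <= 0)); last by rewrite subr_le0 ltW.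
  rewrite powR0 ?gt_eqF // mulr0 => hr.
  have := mulr_ge0 (ltW a0) (powR_ge0 (y r) delta) => hp.
  lra.
have := @core R T0 t y g tT J1 J2 J3 yT0 => yt.
apply/eqP; rewrite eq_le yt /=; apply: ypos; lra.
Qed.
End Aux.

Theorem lemma5p2 (R : realType) (y g : R -> R) (delta alpha T0 : R) :
  W11loc_with_deriv y g ->
  (forall t, 0 <= t -> 0 <= y t) ->
  0 < delta -> delta < 1 -> 0 < alpha -> 0 < T0 ->
  let ystar := (alpha * delta `^ delta * (1 - delta)) `^ (1 / (1 - delta)) in
  let xstar := (alpha * delta * (1 - delta) * T0) `^ (1 / (1 - delta)) in
  y 0 <= xstar ->
  {ae (lebesgue_measure : set R -> \bar R), forall t, 0 < t ->
     g t + alpha * y t `^ delta <=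
       ystar * pos_part (T0 - t) `^ (delta / (1 - delta))} ->
  forall t, T0 <= t -> y t = 0.
Proof. exact: Aux.main_aux. Qed.
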